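(* Let $k$ be a Noetherian commutative ring, $K$ a flat affine group scheme over $k$, and $\{V_{\mathcal O}\}_{\mathcal O}$ a set of $K$-modules such that for every $K$-module $Q$ that is finitely generated as a $k$-module, $\operatorname{Hom}_K(Q,V_{\mathcal O})=0$ for all but finitely many indices $\mathcal O$. Then the direct sum $\bigoplus_{\mathcal O}V_{\mathcal O}$, with the inclusions composed with the canonical maps, is also a product of $\{V_{\mathcal O}\}$ in the category of $K$-modules (i.e. the natural map $\bigoplus_{\mathcal O} V_{\mathcal O}\to\prod^{K\text{-mod}}_{\mathcal O}V_{\mathcal O}$ is an isomorphism).
   Context: A $K$-module for $K=\operatorname{Spec}H$ is an $H$-comodule; $\operatorname{Hom}_K$ denotes comodule homomorphisms. The category of $K$-modules has all small products (which in general differ from products of underlying $k$-modules). *)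

(* Defs.v *)
(* Comodules over a (flat, commutative) Hopf algebra H over a
   commutative ring k, i.e. modules over the affine group scheme K = Spec H.
   Tensor products over k are not in the library; they are encoded below by
   formal finite sums (sequences of pairs/triples) modulo the relation
   generated by multilinearity and k-balancedness. *)
From HB Require Import structures.
From mathcomp Require Import all_boot all_order all_algebra.
From mathcomp Require Import boolp.
From Stdlib Require List.

Set Implicit Arguments.
Unset Strict Implicit.
Unset Printing Implicit Defensive.

Import GRing.Theory.
Local Open Scope ring_scope.

Section Tensor.
Variable k : comNzRingType.

(* s ~ t in U (x)_k V, where s = [:: (u_1,v_1); ...] stands for sum u_j (x) v_j.
   The quotient of the free commutative monoid on U * V by these relations is
   (the additive group of) the tensor product U (x)_k V. *)
Inductive teq2 (U V : lmodType k) : seq (U * V)%type -> seq (U * V)%type -> Prop :=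
| t2_refl s : teq2 s s
| t2_sym s t : teq2 s t -> teq2 t s
| t2_trans s t u : teq2 s t -> teq2 t u -> teq2 s u
| t2_cat s1 t1 s2 t2 : teq2 s1 t1 -> teq2 s2 t2 -> teq2 (s1 ++ s2) (t1 ++ t2)
| t2_swap a b : teq2 [:: a; b] [:: b; a]
| t2_zero v : teq2 [:: (0, v)] [::]
| t2_addl u u' v : teq2 [:: (u + u', v)] [:: (u, v); (u', v)]
| t2_addr u v v' : teq2 [:: (u, v + v')] [:: (u, v); (u, v')]
| t2_bal c u v : teq2 [:: (c *: u, v)] [:: (u, c *: v)].

Inductive teq3 (U V W : lmodType k) :
  seq (U * V * W)%type -> seq (U * V * W)%type -> Prop :=
| t3_refl s : teq3 s s
| t3_sym s t : teq3 s t -> teq3 t s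
| t3_trans s t u : teq3 s t -> teq3 t u -> teq3 s u
| t3_cat s1 t1 s2 t2 : teq3 s1 t1 -> teq3 s2 t2 -> teq3 (s1 ++ s2) (t1 ++ t2)
| t3_swap a b : teq3 [:: a; b] [:: b; a]
| t3_zero v w : teq3 [:: (0, v, w)] [::]
| t3_add1 u u' v w : teq3 [:: (u + u', v, w)] [:: (u, v, w); (u', v, w)]
| t3_add2 u v v' w : teq3 [:: (u, v + v', w)] [:: (u, v, w); (u, v', w)]
| t3_add3 u v w w' : teq3 [:: (u, v, w + w')] [:: (u, v, w); (u, v, w')]
| t3_bal12 c u v w : teq3 [:: (c *: u, v, w)] [:: (u, c *: v, w)]
| t3_bal23 c u v w : teq3 [:: (u, c *: v, w)] [:: (u, v, c *: w)].

Definition tmap2 (U V U' V' : Type) (f : U -> U') (g : V -> V')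
  (s : seq (U * V)%type) : seq (U' * V')%type := [seq (f p.1, g p.2) | p <- s].

Definition klinear (U V : lmodType k) (f : U -> V) : Prop :=
  forall (c : k) (x y : U), f (c *: x + y) = c *: f x + f y.

(* a map U -> U (x) V (given on representatives) is k-linear *)
Definition tlinear (U U' V : lmodType k) (r : U -> seq (U' * V)%type) : Prop :=
  forall (c : k) (x y : U),
    teq2 (r (c *: x + y)) (tmap2 ( *:%R c) id (r x) ++ r y).

End Tensor.

Section Hopf.
Variables (k : comNzRingType) (H : comAlgType k).

Definition tmul (s t : seq (H * H)%type) : seq (H * H)%type :=
  [seq (a.1 * b.1, a.2 * b.2) | a <- s, b <- t].

Record hopf := Hopf {
  comul : H -> seq (H * H)%type;
  counit : H -> k;
  antipode : H -> H;
  comul_lin : tlinear comul;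
  comul_mul : forall x y, teq2 (comul (x * y)) (tmul (comul x) (comul y));
  comul_one : teq2 (comul 1) [:: (1, 1)];
  comul_coassoc : forall x,
    teq3 [seq (q.1, q.2, p.2) | p <- comul x, q <- comul p.1]
         [seq (p.1, q.1, q.2) | p <- comul x, q <- comul p.2];
  counit_lin : forall c x y, counit (c *: x + y) = c * counit x + counit y;
  counit_mul : forall x y, counit (x * y) = counit x * counit y;
  counit_one : counit 1 = 1;
  counitl : forall x, \sum_(p <- comul x) counit p.1 *: p.2 = x;
  counitr : forall x, \sum_(p <- comul x) counit p.2 *: p.1 = x;
  antipode_lin : klinear antipode;
  antipodel : forall x, \sum_(p <- comul x) antipode p.1 * p.2 = counit x *: 1;
  antipoder : forall x, \sum_(p <- comul x) p.1 * antipode p.2 = counit x *: 1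
}.

(* H is flat over k: - (x)_k H preserves injections *)
Definition flat_over : Prop :=
  forall (M N : lmodType k) (f : M -> N), klinear f -> injective f ->
  forall s t : seq (M * H)%type,
    teq2 (tmap2 f id s) (tmap2 f id t) -> teq2 s t.

Variable K : hopf.

Definition is_coaction (V : lmodType k) (r : V -> seq (V * H)%type) : Prop :=
  [/\ tlinear r,
      (forall v, teq3 [seq (q.1, q.2, p.2) | p <- r v, q <- r p.1]
                      [seq (p.1, q.1, q.2) | p <- r v, q <- comul K p.2]) &
      (forall v, \sum_(p <- r v) counit K p.2 *: p.1 = v)].

Record comod := Comod {
  cm_car :> lmodType k;
  cm_co : cm_car -> seq (cm_car * H)%type;
  cm_coP : is_coaction cm_co
}.

Definition is_hom (V W : lmodType k) (rV : V -> seq (V * H)%type)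
  (rW : W -> seq (W * H)%type) (f : V -> W) : Prop :=
  klinear f /\ forall v, teq2 (tmap2 f id (rV v)) (rW (f v)).

Definition Khom (V W : comod) (f : V -> W) := is_hom (@cm_co V) (@cm_co W) f.

Definition Hom_zero (Q V : comod) : Prop :=
  forall f : Q -> V, Khom f -> forall q, f q = 0.

Definition fin_gen (M : lmodType k) : Prop :=
  exists s : seq M, forall m : M,
    exists c : 'I_(size s) -> k, m = \sum_(i < size s) c i *: s`_i.

End Hopf.

Definition is_ideal (k : comNzRingType) (J : k -> Prop) : Prop :=
  [/\ J 0, (forall x y, J x -> J y -> J (x + y)) &
      (forall a x, J x -> J (a * x))].

Definition noetherian (k : comNzRingType) : Prop :=
  forall J : k -> Prop, is_ideal J ->
  exists s : seq k, forall x, J x <->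
    exists c : 'I_(size s) -> k, x = \sum_(i < size s) c i * s`_i.

Section DirectSum.
Variables (k : comNzRingType) (I : Type) (V : I -> lmodType k).

Definition finsupp (f : forall i, V i) : Prop :=
  exists s : seq I, forall i, ~ List.In i s -> f i = 0.

Definition dsum := {f : forall i, V i | finsupp f}.

HB.instance Definition _ := gen_eqMixin dsum.
HB.instance Definition _ := gen_choiceMixin dsum.

Lemma dsum_ext (f g : dsum) : (forall i, sval f i = sval g i) -> f = g.
Proof.
case: f g => [f fP] [g gP] /= E.
have efg : f = g by apply: functional_extensionality_dep.
subst g; congr exist; exact: Prop_irrelevance.
Qed.

Lemma finsupp0 : finsupp (fun i => 0).
Proof. by exists [::]. Qed.

Lemma finsuppN (f : dsum) : finsupp (fun i => - sval f i).
Proof. case: f => f [s Hs]; exists s => i /Hs /= ->; exact: oppr0. Qed.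

Lemma finsuppD (f g : dsum) : finsupp (fun i => sval f i + sval g i).
Proof.
case: f g => f [s Hs] [g [t Ht]]; exists (s ++ t) => i /= Hi.
rewrite Hs ?Ht ?addr0 // => H; apply: Hi; apply: List.in_or_app; tauto.
Qed.

Lemma finsuppZ (c : k) (f : dsum) : finsupp (fun i => c *: sval f i).
Proof. case: f => f [s Hs]; exists s => i /Hs /= ->; exact: scaler0. Qed.

Definition dsum0 : dsum := exist _ _ finsupp0.
Definition dsumN (f : dsum) : dsum := exist _ _ (finsuppN f).
Definition dsumD (f g : dsum) : dsum := exist _ _ (finsuppD f g).
Definition dsumZ (c : k) (f : dsum) : dsum := exist _ _ (finsuppZ c f).

Lemma dsumA : associative dsumD.
Proof. by move=> f g h; apply: dsum_ext => i /=; rewrite addrA. Qed.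
Lemma dsumC : commutative dsumD.
Proof. by move=> f g; apply: dsum_ext => i /=; rewrite addrC. Qed.
Lemma dsum0l : left_id dsum0 dsumD.
Proof. by move=> f; apply: dsum_ext => i /=; rewrite add0r. Qed.
Lemma dsumNl : left_inverse dsum0 dsumN dsumD.
Proof. by move=> f; apply: dsum_ext => i /=; rewrite addNr. Qed.

HB.instance Definition _ := GRing.isZmodule.Build dsum dsumA dsumC dsum0l dsumNl.

Lemma dsumZA a b (f : dsum) : dsumZ a (dsumZ b f) = dsumZ (a * b) f.
Proof. by apply: dsum_ext => i /=; rewrite scalerA. Qed.
Lemma dsumZ1 : left_id 1 dsumZ.
Proof. by move=> f; apply: dsum_ext => i /=; rewrite scale1r. Qed.
Lemma dsumZDr : right_distributive dsumZ +%R.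
Proof. by move=> a f g; apply: dsum_ext => i /=; rewrite scalerDr. Qed.
Lemma dsumZDl (f : dsum) : {morph dsumZ^~ f : a b / a + b}.
Proof. by move=> a b; apply: dsum_ext => i /=; rewrite scalerDl. Qed.

HB.instance Definition _ :=
  GRing.Zmodule_isLmodule.Build k dsum dsumZA dsumZ1 dsumZDr dsumZDl.

Definition dproj (i : I) (f : dsum) : V i := sval f i.

Definition dinj_fun (i : I) (v : V i) : forall j, V j :=
  fun j => match pselect (i = j) with
           | left e => eq_rect i V v j e
           | right _ => 0
           end.

Lemma finsupp_inj (i : I) (v : V i) : finsupp (dinj_fun v).
Proof.
exists [:: i] => j Hj; rewrite /dinj_fun; case: pselect => // e.
by exfalso; apply: Hj; left.
Qed.

Definition dinj (i : I) (v : V i) : dsum := exist _ _ (finsupp_inj v).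

Definition Idec (i j : I) : {i = j} + {i <> j} := pselect (i = j).

Definition dsupp (f : dsum) : seq I :=
  List.nodup Idec (sval (cid (svalP f))).

End DirectSum.

Arguments dproj {k I V} i f.

Definition dsum_co (k : comNzRingType) (H : comAlgType k) (K : hopf H)
  (I : Type) (V : I -> comod K) (f : dsum (fun i => cm_car (V i))) :
  seq (dsum (fun i => cm_car (V i)) * H)%type :=
  flatten [seq tmap2 (@dinj k I (fun i => cm_car (V i)) i) id
                     (cm_co (dproj i f)) | i <- dsupp f].

Definition is_Kproduct (k : comNzRingType) (H : comAlgType k) (K : hopf H)
  (I : Type) (V : I -> comod K) (P : lmodType k) (rP : P -> seq (P * H)%type)
  (p : forall i, P -> V i) : Prop :=
  [/\ is_coaction K rP,
      (forall i, is_hom rP (@cm_co _ _ K (V i)) (p i)) &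
      (forall (W : comod K) (f : forall i, W -> V i),
         (forall i, Khom (f i)) ->
         exists g : W -> P,
           [/\ is_hom (@cm_co _ _ K W) rP g,
               (forall i w, p i (g w) = f i w) &
               (forall g' : W -> P, is_hom (@cm_co _ _ K W) rP g' ->
                  (forall i w, p i (g' w) = f i w) -> forall w, g' w = g w)])].

(* Main.v *)
From HB Require Import structures.
Require Import Defs.
From mathcomp Require Import all_boot all_order all_algebra.
From mathcomp Require Import boolp.
From Stdlib Require List.
Set Implicit Arguments. Unset Strict Implicit. Unset Printing Implicit Defensive.
Import GRing.Theory.
Local Open Scope ring_scope.

Section KL.
Variable k : comNzRingType.

Lemma klin0 (U V : lmodType k) (f : U -> V) : klinear f -> f 0 = 0.
Proof.
move=> hf; have := hf 1 0 0; rewrite !scale1r addr0 => e.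
by apply: (addrI (f 0)); rewrite addr0 -e.
Qed.
Lemma klinD (U V : lmodType k) (f : U -> V) : klinear f -> forall x y, f (x + y) = f x + f y.
Proof. by move=> hf x y; have := hf 1 x y; rewrite !scale1r. Qed.
Lemma klinZ (U V : lmodType k) (f : U -> V) : klinear f -> forall c x, f (c *: x) = c *: f x.
Proof. by move=> hf c x; rewrite -[c *: x]addr0 hf klin0 // addr0. Qed.
Lemma klinN (U V : lmodType k) (f : U -> V) : klinear f -> forall x, f (- x) = - f x.
Proof. by move=> hf x; rewrite -scaleN1r klinZ // scaleN1r. Qed.
Lemma klin_id (U : lmodType k) : klinear (@id U).
Proof. by []. Qed.
Lemma klin_comp (U V W : lmodType k) (f : U -> V) (g : V -> W) :
  klinear f -> klinear g -> klinear (g \o f).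
Proof. by move=> hf hg c x y; rewrite /= hf hg. Qed.
Lemma klin_scale (U : lmodType k) (c : k) : klinear (fun x : U => c *: x).
Proof. by move=> a x y; rewrite scalerDr !scalerA mulrC. Qed.
Lemma klin_sum (U V : lmodType k) (f : U -> V) (hf : klinear f) (I : Type) (s : seq I) (F : I -> U) :
  f (\sum_(i <- s) F i) = \sum_(i <- s) f (F i).
Proof.
elim: s => [|a s IH]; first by rewrite !big_nil klin0.
by rewrite !big_cons klinD // IH.
Qed.

Lemma tmap2_cat (A B A' B' : Type) (f : A -> A') (g : B -> B') s t :
  tmap2 f g (s ++ t) = tmap2 f g s ++ tmap2 f g t.
Proof. exact: map_cat. Qed.
Lemma tmap2_comp (A B A' B' A'' : Type) (f : A -> A') (f' : A' -> A'') (g : B -> B') s :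
  tmap2 f' id (tmap2 f g s) = tmap2 (f' \o f) g s.
Proof. by rewrite /tmap2 -map_comp. Qed.
Lemma tmap2_id (A B : Type) (s : seq (A * B)) : tmap2 id id s = s.
Proof. by rewrite /tmap2; elim: s => [|[a b] s /= ->]. Qed.
Lemma tmap2_ext (A B A' B' : Type) (f f' : A -> A') (g : B -> B') s :
  (forall x, f x = f' x) -> tmap2 f g s = tmap2 f' g s.
Proof. by move=> e; apply: eq_map => p; rewrite e. Qed.

Section T2.
Variables U V : lmodType k.
Notation R := (@teq2 k U V).

Lemma teq2_catl s t u : R s t -> R (u ++ s) (u ++ t).
Proof. by move=> h; apply: t2_cat => //; apply: t2_refl. Qed.
Lemma teq2_catr s t u : R s t -> R (s ++ u) (t ++ u).
Proof. by move=> h; apply: t2_cat => //; apply: t2_refl. Qed.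
Lemma teq2_cons a s t : R s t -> R (a :: s) (a :: t).
Proof. exact: (@teq2_catl _ _ [:: a]). Qed.
Lemma teq2_comm1 a t : R (a :: t) (t ++ [:: a]).
Proof.
elim: t => [|b t IH] /=; first exact: t2_refl.
apply: t2_trans (_ : R (b :: a :: t) _); last exact: teq2_cons.
exact: (@teq2_catr [:: a; b] [:: b; a] t (t2_swap _ _)).
Qed.
Lemma teq2_comm s t : R (s ++ t) (t ++ s).
Proof.
elim: s => [|a s IH] /=; first by rewrite cats0; apply: t2_refl.
apply: t2_trans (_ : R (a :: (t ++ s)) _); first exact: teq2_cons.
rewrite -cat1s catA; apply: t2_trans (_ : R ((t ++ [:: a]) ++ s) _).
  exact/teq2_catr/teq2_comm1.
by rewrite -catA; apply: t2_refl.
Qed.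
Lemma teq2_swap2 s1 s2 t1 t2 : R s1 t1 -> R s2 t2 -> R (s1 ++ s2) (t2 ++ t1).
Proof. move=> h1 h2; apply: t2_trans (teq2_comm _ _); exact: t2_cat. Qed.
Lemma teq2_mid a b c d : R ((a ++ b) ++ (c ++ d)) ((a ++ c) ++ (b ++ d)).
Proof.
rewrite -!catA; apply: teq2_catl; rewrite !catA; apply: teq2_catr; exact: teq2_comm.
Qed.

Lemma teq2_zero2 u : R [:: (u, 0)] [::].
Proof.
have -> : [:: (u, 0)] = [:: (u, 0 *: (0 : V))] by rewrite scaler0.
apply: t2_trans (t2_sym (t2_bal _ _ _)) _; rewrite scale0r; exact: t2_zero.
Qed.

Lemma teq2_flatten (I : Type) (F G : I -> seq (U * V)) (s : seq I) :
  (forall i, List.In i s -> R (F i) (G i)) -> R (flatten (map F s)) (flatten (map G s)).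
Proof.
elim: s => [|a s IH] h /=; first exact: t2_refl.
apply: t2_cat; first by apply: h; left.
by apply: IH => i hi; apply: h; right.
Qed.

Lemma teq2_flattenD (I : Type) (F G : I -> seq (U * V)) (s : seq I) :
  R (flatten (map (fun i => F i ++ G i) s)) (flatten (map F s) ++ flatten (map G s)).
Proof.
elim: s => [|a s IH] /=; first exact: t2_refl.
apply: t2_trans (_ : R ((F a ++ G a) ++ (flatten (map F s) ++ flatten (map G s))) _).
  exact: teq2_catl.
exact: teq2_mid.
Qed.

Lemma teq2_flatten_nil (I : Type) (F : I -> seq (U * V)) (s : seq I) :
  (forall i, List.In i s -> R (F i) [::]) -> R (flatten (map F s)) [::].
Proof.
move=> h; apply: t2_trans (_ : R (flatten (map (fun=> [::]) s)) _).
  exact: teq2_flatten.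
by elim: s {h} => [|a s IH] /=; [exact: t2_refl | exact: IH].
Qed.

Lemma teq2_neg s : R (tmap2 (fun x => - x) id s ++ s) [::].
Proof.
elim: s => [|[u v] s IH] /=; first exact: t2_refl.
apply: t2_trans (_ : R ([:: (- u, v); (u, v)] ++ (tmap2 (fun x => - x) id s ++ s)) _).
  rewrite /=; apply: teq2_cons; rewrite -cat1s catA -[in X in R _ X]cat1s catA.
  apply: teq2_catr; exact: teq2_comm.
rewrite -[[::]]/([::] ++ [::]); apply: t2_cat => //.
apply: t2_trans (_ : R [:: (- u + u, v)] _); first exact: t2_sym (t2_addl _ _ _).
rewrite addNr; exact: t2_zero.
Qed.

Lemma teq2_cancel s t u : R (s ++ u) (t ++ u) -> R s t.
Proof.
move=> h.
have hn : R (u ++ tmap2 (fun x => - x) id u) [::] by apply: t2_trans (teq2_comm _ _) (teq2_neg _).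
apply: t2_trans (_ : R (s ++ (u ++ tmap2 (fun x => - x) id u)) _).
  by rewrite -{1}[s]cats0; apply: teq2_catl; apply: t2_sym.
apply: t2_trans (_ : R (t ++ (u ++ tmap2 (fun x => - x) id u)) _).
  by rewrite !catA; apply: teq2_catr.
by rewrite -[t in R _ t]cats0; apply: teq2_catl.
Qed.

Lemma teq2_sum (M : nmodType) (phi : U * V -> M) :
  (forall v, phi (0, v) = 0) ->
  (forall u u' v, phi (u + u', v) = phi (u, v) + phi (u', v)) ->
  (forall u v v', phi (u, v + v') = phi (u, v) + phi (u, v')) ->
  (forall c u v, phi (c *: u, v) = phi (u, c *: v)) ->
  forall s t, R s t -> \sum_(p <- s) phi p = \sum_(p <- t) phi p.
Proof.
move=> h0 hl hr hb s t; elim => {s t} //.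
- by move=> s t u _ -> _ ->.
- by move=> s1 t1 s2 t2 _ e1 _ e2; rewrite !big_cat e1 e2.
- by move=> a b; rewrite !big_cons !big_nil !addr0 addrC.
- by move=> v; rewrite big_cons big_nil addr0 h0.
- by move=> u u' v; rewrite !big_cons !big_nil !addr0 hl.
- by move=> u v v'; rewrite !big_cons !big_nil !addr0 hr.
- by move=> c u v; rewrite !big_cons !big_nil !addr0 hb.
Qed.

End T2.

Lemma teq2_map (U V U' V' : lmodType k) (f : U -> U') (g : V -> V') :
  klinear f -> klinear g -> forall s t, teq2 s t -> teq2 (tmap2 f g s) (tmap2 f g t).
Proof.
move=> hf hg s t; elim => {s t}.
- by move=> s; apply: t2_refl.
- by move=> s t _ h; apply: t2_sym.
- by move=> s t u _ h1 _ h2; apply: t2_trans h1 h2.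
- by move=> s1 t1 s2 t2 _ h1 _ h2; rewrite !tmap2_cat; apply: t2_cat.
- by move=> a b; apply: t2_swap.
- by move=> v; rewrite /tmap2 /= klin0 //; apply: t2_zero.
- by move=> u u' v; rewrite /tmap2 /= klinD //; apply: t2_addl.
- by move=> u v v'; rewrite /tmap2 /= klinD //; apply: t2_addr.
- move=> c u v; rewrite /tmap2 /= (klinZ hf) (klinZ hg); apply: t2_bal.
Qed.

Lemma teq2_map1 (U V U' : lmodType k) (f : U -> U') :
  klinear f -> forall s t : seq (U * V), teq2 s t -> teq2 (tmap2 f id s) (tmap2 f id t).
Proof. by move=> hf; apply: teq2_map. Qed.

Section TL.
Variables (U U' V : lmodType k) (r : U -> seq (U' * V)).
Hypothesis hr : tlinear r.

Lemma tmap2_scale1 (s : seq (U' * V)) : tmap2 ( *:%R 1) id s = s.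
Proof. by rewrite (@tmap2_ext _ _ _ _ _ id) ?tmap2_id // => x; rewrite scale1r. Qed.

Lemma tl_add x y : teq2 (r (x + y)) (r x ++ r y).
Proof. by have := hr 1 x y; rewrite scale1r tmap2_scale1. Qed.
Lemma tl_0 : teq2 (r 0) [::].
Proof.
have := hr (-1) 0 0; rewrite scaler0 addr0 => h; apply: t2_trans h _.
rewrite (@tmap2_ext _ _ _ _ _ (fun x => - x)); first exact: teq2_neg.
by move=> x; rewrite scaleN1r.
Qed.
Lemma tl_scale c x : teq2 (r (c *: x)) (tmap2 ( *:%R c) id (r x)).
Proof.
have := hr c x 0; rewrite addr0 => h; apply: t2_trans h _.
by rewrite -[X in teq2 _ X]cats0; apply: teq2_catl; exact: tl_0.
Qed.
End TL.

Section T3.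
Variables U V W : lmodType k.
Notation R3 := (@teq3 k U V W).

Lemma teq3_catl s t u : R3 s t -> R3 (u ++ s) (u ++ t).
Proof. by move=> h; apply: t3_cat => //; apply: t3_refl. Qed.
Lemma teq3_catr s t u : R3 s t -> R3 (s ++ u) (t ++ u).
Proof. by move=> h; apply: t3_cat => //; apply: t3_refl. Qed.
Lemma teq3_cons a s t : R3 s t -> R3 (a :: s) (a :: t).
Proof. exact: (@teq3_catl _ _ [:: a]). Qed.
Lemma teq3_comm1 a t : R3 (a :: t) (t ++ [:: a]).
Proof.
elim: t => [|b t IH] /=; first exact: t3_refl.
apply: t3_trans (_ : R3 (b :: a :: t) _); last exact: teq3_cons.
exact: (@teq3_catr [:: a; b] [:: b; a] t (t3_swap _ _)).
Qed.
Lemma teq3_comm s t : R3 (s ++ t) (t ++ s).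
Proof.
elim: s => [|a s IH] /=; first by rewrite cats0; apply: t3_refl.
apply: t3_trans (_ : R3 (a :: (t ++ s)) _); first exact: teq3_cons.
rewrite -cat1s catA; apply: t3_trans (_ : R3 ((t ++ [:: a]) ++ s) _).
  exact/teq3_catr/teq3_comm1.
by rewrite -catA; apply: t3_refl.
Qed.
Lemma teq3_mid a b c d : R3 ((a ++ b) ++ (c ++ d)) ((a ++ c) ++ (b ++ d)).
Proof.
rewrite -!catA; apply: teq3_catl; rewrite !catA; apply: teq3_catr; exact: teq3_comm.
Qed.
Lemma teq3_flatten (I : Type) (F G : I -> seq (U * V * W)) (s : seq I) :
  (forall i, List.In i s -> R3 (F i) (G i)) -> R3 (flatten (map F s)) (flatten (map G s)).
Proof.
elim: s => [|a s IH] h /=; first exact: t3_refl.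
apply: t3_cat; first by apply: h; left.
by apply: IH => i hi; apply: h; right.
Qed.
Lemma teq3_flattenD (I : Type) (F G : I -> seq (U * V * W)) (s : seq I) :
  R3 (flatten (map (fun i => F i ++ G i) s)) (flatten (map F s) ++ flatten (map G s)).
Proof.
elim: s => [|a s IH] /=; first exact: t3_refl.
apply: t3_trans (_ : R3 ((F a ++ G a) ++ (flatten (map F s) ++ flatten (map G s))) _).
  exact: teq3_catl.
exact: teq3_mid.
Qed.
Lemma teq3_flatten_nil (I : Type) (F : I -> seq (U * V * W)) (s : seq I) :
  (forall i, List.In i s -> R3 (F i) [::]) -> R3 (flatten (map F s)) [::].
Proof.
move=> h; apply: t3_trans (_ : R3 (flatten (map (fun=> [::]) s)) _).
  exact: teq3_flatten.
by elim: s {h} => [|a s IH] /=; [exact: t3_refl | exact: IH].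
Qed.
Lemma teq3_map_each (I : Type) (F G : I -> U * V * W) (s : seq I) :
  (forall i, R3 [:: F i] [:: G i]) -> R3 (map F s) (map G s).
Proof.
move=> h; elim: s => [|a s IH] /=; first exact: t3_refl.
exact: (t3_cat (h a) IH).
Qed.
Lemma teq3_zero2 u w : R3 [:: (u, 0, w)] [::].
Proof.
have -> : [:: (u, 0, w)] = [:: (u, 0 *: (0 : V), w)] by rewrite scaler0.
apply: t3_trans (t3_sym (t3_bal12 _ _ _ _)) _; rewrite scale0r; exact: t3_zero.
Qed.
Lemma teq3_zero3 u v : R3 [:: (u, v, 0)] [::].
Proof.
have -> : [:: (u, v, 0)] = [:: (u, v, 0 *: (0 : W))] by rewrite scaler0.
apply: t3_trans (t3_sym (t3_bal23 _ _ _ _)) _; rewrite scale0r; exact: teq3_zero2.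
Qed.
Lemma teq3_add3s (a : seq (U * V)) (w w' : W) :
  R3 [seq (q.1, q.2, w + w') | q <- a]
     ([seq (q.1, q.2, w) | q <- a] ++ [seq (q.1, q.2, w') | q <- a]).
Proof.
elim: a => [|q a IH] /=; first exact: t3_refl.
apply: t3_trans (_ : R3 ([:: (q.1, q.2, w); (q.1, q.2, w')] ++
   ([seq (q.1, q.2, w) | q <- a] ++ [seq (q.1, q.2, w') | q <- a])) _).
  exact: (t3_cat (t3_add3 _ _ _ _) IH).
exact: (@teq3_mid [:: _] [:: _]).
Qed.
Lemma teq3_add1s (a : seq (V * W)) (u u' : U) :
  R3 [seq (u + u', q.1, q.2) | q <- a]
     ([seq (u, q.1, q.2) | q <- a] ++ [seq (u', q.1, q.2) | q <- a]).
Proof.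
elim: a => [|q a IH] /=; first exact: t3_refl.
apply: t3_trans (_ : R3 ([:: (u, q.1, q.2); (u', q.1, q.2)] ++
   ([seq (u, q.1, q.2) | q <- a] ++ [seq (u', q.1, q.2) | q <- a])) _).
  exact: (t3_cat (t3_add1 _ _ _ _) IH).
exact: (@teq3_mid [:: _] [:: _]).
Qed.
End T3.

Lemma teq3_map1 (U V W U' : lmodType k) (f : U -> U') : klinear f ->
  forall s t : seq (U * V * W), teq3 s t ->
  teq3 [seq (f x.1.1, x.1.2, x.2) | x <- s] [seq (f x.1.1, x.1.2, x.2) | x <- t].
Proof.
move=> hf s t; elim => {s t}.
- by move=> s; apply: t3_refl.
- by move=> s t _ h; apply: t3_sym.
- by move=> s t u _ h1 _ h2; apply: t3_trans h1 h2.
- by move=> s1 t1 s2 t2 _ h1 _ h2; rewrite !map_cat; apply: t3_cat.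
- by move=> a b; apply: t3_swap.
- by move=> v w /=; rewrite klin0 //; apply: t3_zero.
- by move=> u u' v w /=; rewrite klinD //; apply: t3_add1.
- by move=> u v v' w /=; apply: t3_add2.
- by move=> u v w w' /=; apply: t3_add3.
- by move=> c u v w /=; rewrite (klinZ hf); apply: t3_bal12.
- by move=> c u v w /=; apply: t3_bal23.
Qed.

Lemma teq2_to3 (U V W : lmodType k) (h : W) (a b : seq (U * V)) :
  teq2 a b -> teq3 [seq (q.1, q.2, h) | q <- a] [seq (q.1, q.2, h) | q <- b].
Proof.
elim => {a b}.
- by move=> s; apply: t3_refl.
- by move=> s t _ e; apply: t3_sym.
- by move=> s t u _ h1 _ h2; apply: t3_trans h1 h2.
- by move=> s1 t1 s2 t2 _ h1 _ h2; rewrite !map_cat; apply: t3_cat.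
- by move=> x y; apply: t3_swap.
- by move=> v /=; apply: t3_zero.
- by move=> u u' v /=; apply: t3_add1.
- by move=> u v v' /=; apply: t3_add2.
- by move=> c u v /=; apply: t3_bal12.
Qed.

Lemma teq2_to3' (U V W : lmodType k) (u : U) (a b : seq (V * W)) :
  teq2 a b -> teq3 [seq (u, q.1, q.2) | q <- a] [seq (u, q.1, q.2) | q <- b].
Proof.
elim => {a b}.
- by move=> s; apply: t3_refl.
- by move=> s t _ e; apply: t3_sym.
- by move=> s t w _ h1 _ h2; apply: t3_trans h1 h2.
- by move=> s1 t1 s2 t2 _ h1 _ h2; rewrite !map_cat; apply: t3_cat.
- by move=> x y; apply: t3_swap.
- by move=> v /=; apply: teq3_zero2.
- by move=> v v' w /=; apply: t3_add2.
- by move=> v w w' /=; apply: t3_add3.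
- by move=> c v w /=; apply: t3_bal23.
Qed.

End KL.

Section BC.
Variable k : comNzRingType.

Definition Bmap (U U' X Y : lmodType k) (r : U -> seq (U' * X)) (s : seq (U * Y)) :
  seq (U' * X * Y) :=
  flatten [seq [seq (q.1, q.2, p.2) | q <- r p.1] | p <- s].
Definition Cmap (U X Y Z : lmodType k) (d : X -> seq (Y * Z)) (s : seq (U * X)) :
  seq (U * Y * Z) :=
  flatten [seq [seq (p.1, q.1, q.2) | q <- d p.2] | p <- s].

Lemma teq3_zero_map (U V W : lmodType k) (a : seq (V * W)) :
  teq3 [seq ((0 : U), q.1, q.2) | q <- a] [::].
Proof.
elim: a => [|q a IH] /=; first exact: t3_refl.
have := t3_cat (@t3_zero k U V W q.1 q.2) IH; by [].
Qed.

Lemma Bmap_teq2 (U U' X Y : lmodType k) (r : U -> seq (U' * X)) :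
  tlinear r -> forall s t : seq (U * Y), teq2 s t -> teq3 (Bmap r s) (Bmap r t).
Proof.
move=> hr s t; elim => {s t}.
- by move=> s; apply: t3_refl.
- by move=> s t _ e; apply: t3_sym.
- by move=> s t u _ h1 _ h2; apply: t3_trans h1 h2.
- by move=> s1 t1 s2 t2 _ h1 _ h2; rewrite /Bmap !map_cat !flatten_cat; apply: t3_cat.
- by move=> a b; rewrite /Bmap /= !cats0; apply: teq3_comm.
- move=> v; rewrite /Bmap /= cats0.
  have := teq2_to3 v (tl_0 hr); by [].
- move=> u u' v; rewrite /Bmap /= !cats0 -map_cat.
  exact: teq2_to3 (tl_add hr _ _).
- move=> u v v'; rewrite /Bmap /= !cats0; exact: teq3_add3s.
- move=> c u v; rewrite /Bmap /= !cats0.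
  apply: t3_trans (teq2_to3 v (tl_scale hr c u)) _.
  rewrite /tmap2 -map_comp; apply: teq3_map_each => q /=.
  exact: t3_trans (t3_bal12 _ _ _ _) (t3_bal23 _ _ _ _).
Qed.

Lemma Cmap_teq2 (U X Y Z : lmodType k) (d : X -> seq (Y * Z)) :
  tlinear d -> forall s t : seq (U * X), teq2 s t -> teq3 (Cmap d s) (Cmap d t).
Proof.
move=> hd s t; elim => {s t}.
- by move=> s; apply: t3_refl.
- by move=> s t _ e; apply: t3_sym.
- by move=> s t u _ h1 _ h2; apply: t3_trans h1 h2.
- by move=> s1 t1 s2 t2 _ h1 _ h2; rewrite /Cmap !map_cat !flatten_cat; apply: t3_cat.
- by move=> a b; rewrite /Cmap /= !cats0; apply: teq3_comm.
- move=> v; rewrite /Cmap /= cats0; exact: teq3_zero_map.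
- move=> u u' v; rewrite /Cmap /= !cats0; exact: teq3_add1s.
- move=> u v v'; rewrite /Cmap /= !cats0 -map_cat.
  exact: teq2_to3' (tl_add hd _ _).
- move=> c u v; rewrite /Cmap /= !cats0.
  apply: t3_sym; apply: t3_trans (teq2_to3' u (tl_scale hd c v)) _.
  rewrite /tmap2 -map_comp; apply: teq3_map_each => q /=.
  exact: t3_sym (t3_bal12 _ _ _ _).
Qed.

Lemma teq2_scaleD (U V : lmodType k) (a b : k) (s : seq (U * V)) :
  teq2 (tmap2 ( *:%R (a + b)) id s) (tmap2 ( *:%R a) id s ++ tmap2 ( *:%R b) id s).
Proof.
elim: s => [|[u v] s IH] /=; first exact: t2_refl.
rewrite scalerDl.
apply: t2_trans (_ : teq2 ([:: (a *: u, v); (b *: u, v)] ++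
   (tmap2 ( *:%R a) id s ++ tmap2 ( *:%R b) id s)) _).
  exact: (t2_cat (t2_addl _ _ _) IH).
exact: (@teq2_mid _ _ _ [:: _] [:: _]).
Qed.

Lemma teq2_scale (U V : lmodType k) (c : k) (s t : seq (U * V)) :
  teq2 s t -> teq2 (tmap2 ( *:%R c) id s) (tmap2 ( *:%R c) id t).
Proof. by apply: teq2_map1; apply: klin_scale. Qed.

Record qrel (U V : lmodType k) := QRel {
  qr :> seq (U * V) -> seq (U * V) -> Prop;
  qr_refl : forall s, qr s s;
  qr_sym : forall s t, qr s t -> qr t s;
  qr_trans : forall s t u, qr s t -> qr t u -> qr s u;
  qr_cat : forall s1 t1 s2 t2, qr s1 t1 -> qr s2 t2 -> qr (s1 ++ s2) (t1 ++ t2);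
  qr_teq : forall s t, teq2 s t -> qr s t;
  qr_scale : forall c s t, qr s t -> qr (tmap2 ( *:%R c) id s) (tmap2 ( *:%R c) id t)
}.

Section Quot.
Variables (U V : lmodType k) (E : qrel U V).

Definition Qt := {X : seq (U * V) -> Prop | exists s, X = E s}.
HB.instance Definition _ := gen_eqMixin Qt.
HB.instance Definition _ := gen_choiceMixin Qt.

Definition cls (s : seq (U * V)) : Qt := exist _ (E s) (ex_intro _ s erefl).
Definition rep (X : Qt) : seq (U * V) := sval (cid (svalP X)).

Lemma cls_rep X : cls (rep X) = X.
Proof.
rewrite /rep; case: (cid _) => s hs /=; case: X hs => X hX /= hs; subst X.
by congr exist; apply: Prop_irrelevance.
Qed.

Lemma cls_eq s t : cls s = cls t <-> E s t.
Proof.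
split=> [h | h].
  have : E s = E t by move/(congr1 sval): h.
  by move=> e; apply: qr_sym; rewrite -e; apply: qr_refl.
have e : E s = E t.
  apply: funext => u; apply: propext; split=> hu.
    exact: qr_trans (qr_sym h) hu.
  exact: qr_trans h hu.
rewrite /cls; move: (ex_intro _ s _) (ex_intro _ t _); rewrite e => p1 p2.
by congr exist; apply: Prop_irrelevance.
Qed.

Lemma rep_cls s : E (rep (cls s)) s.
Proof. by apply/cls_eq; rewrite cls_rep. Qed.

Definition qadd (X Y : Qt) := cls (rep X ++ rep Y).
Definition qopp (X : Qt) := cls (tmap2 (fun x => - x) id (rep X)).
Definition q0 := cls [::].
Definition qscale (c : k) (X : Qt) := cls (tmap2 ( *:%R c) id (rep X)).

Lemma qaddE s t : qadd (cls s) (cls t) = cls (s ++ t).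
Proof. by apply/cls_eq; apply: qr_cat; apply: rep_cls. Qed.
Lemma qscaleE c s : qscale c (cls s) = cls (tmap2 ( *:%R c) id s).
Proof. by apply/cls_eq; apply: qr_scale; apply: rep_cls. Qed.
Lemma qoppE s : qopp (cls s) = cls (tmap2 (fun x => - x) id s).
Proof.
rewrite /qopp (@tmap2_ext _ _ _ _ _ ( *:%R (-1))); last by move=> x; rewrite scaleN1r.
rewrite [X in _ = cls X](@tmap2_ext _ _ _ _ _ ( *:%R (-1))); last by move=> x; rewrite scaleN1r.
by apply/cls_eq; apply: qr_scale; apply: rep_cls.
Qed.

Lemma qaddA : associative qadd.
Proof.
move=> X Y Z; rewrite -(cls_rep X) -(cls_rep Y) -(cls_rep Z) !qaddE.
by rewrite catA.
Qed.
Lemma qaddC : commutative qadd.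
Proof.
move=> X Y; rewrite -(cls_rep X) -(cls_rep Y) !qaddE.
by apply/cls_eq/qr_teq/teq2_comm.
Qed.
Lemma qadd0 : left_id q0 qadd.
Proof. by move=> X; rewrite -(cls_rep X) /q0 qaddE. Qed.
Lemma qaddN : left_inverse q0 qopp qadd.
Proof.
by move=> X; rewrite -(cls_rep X) qoppE qaddE; apply/cls_eq/qr_teq/teq2_neg.
Qed.

HB.instance Definition _ := GRing.isZmodule.Build Qt qaddA qaddC qadd0 qaddN.

Lemma qaddE' s t : cls s + cls t = cls (s ++ t).
Proof. exact: qaddE. Qed.

Lemma qZA a b (X : Qt) : qscale a (qscale b X) = qscale (a * b) X.
Proof.
rewrite -(cls_rep X) !qscaleE tmap2_comp; congr cls.
by apply: tmap2_ext => x /=; rewrite scalerA.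
Qed.
Lemma qZ1 : left_id 1 qscale.
Proof. by move=> X; rewrite -(cls_rep X) qscaleE tmap2_scale1. Qed.
Lemma qZDr : right_distributive qscale +%R.
Proof.
move=> c X Y; rewrite -(cls_rep X) -(cls_rep Y).
by rewrite [_ + _]qaddE !qscaleE [_ + _]qaddE tmap2_cat.
Qed.
Lemma qZDl (X : Qt) : {morph qscale^~ X : a b / a + b}.
Proof.
move=> a b; rewrite -(cls_rep X) !qscaleE qaddE'.
by apply/cls_eq/qr_teq/teq2_scaleD.
Qed.

HB.instance Definition _ := GRing.Zmodule_isLmodule.Build k Qt qZA qZ1 qZDr qZDl.

Lemma cls_add s t : cls (s ++ t) = cls s + cls t.
Proof. by rewrite qaddE'. Qed.
Lemma cls_nil : cls [::] = 0.
Proof. by []. Qed.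
Lemma cls_scale c s : cls (tmap2 ( *:%R c) id s) = c *: cls s.
Proof. by rewrite [_ *: _]qscaleE. Qed.

Lemma rep_tlinear : tlinear rep.
Proof. Abort.

(* the associativity map (U (x) V) (x) W <- U (x) V (x) W *)
Definition Fmap (W : lmodType k) (s : seq (U * V * W)) : seq (Qt * W) :=
  [seq (cls [:: (x.1.1, x.1.2)], x.2) | x <- s].

Lemma Fmap_teq3 (W : lmodType k) (s t : seq (U * V * W)) :
  teq3 s t -> teq2 (Fmap s) (Fmap t).
Proof.
elim => {s t}.
- by move=> s; apply: t2_refl.
- by move=> s t _ e; apply: t2_sym.
- by move=> s t u _ h1 _ h2; apply: t2_trans h1 h2.
- by move=> s1 t1 s2 t2 _ h1 _ h2; rewrite /Fmap !map_cat; apply: t2_cat.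
- by move=> a b; apply: t2_swap.
- move=> v w; rewrite /Fmap /=.
  have -> : cls [:: (0, v)] = 0 by apply/cls_eq/qr_teq/t2_zero.
  exact: t2_zero.
- move=> u u' v w; rewrite /Fmap /=.
  have -> : cls [:: (u + u', v)] = cls [:: (u, v)] + cls [:: (u', v)].
    by rewrite -cls_add; apply/cls_eq/qr_teq/t2_addl.
  exact: t2_addl.
- move=> u v v' w; rewrite /Fmap /=.
  have -> : cls [:: (u, v + v')] = cls [:: (u, v)] + cls [:: (u, v')].
    by rewrite -cls_add; apply/cls_eq/qr_teq/t2_addr.
  exact: t2_addl.
- by move=> u v w w'; rewrite /Fmap /=; apply: t2_addr.
- move=> c u v w; rewrite /Fmap /=.
  have -> : cls [:: (c *: u, v)] = cls [:: (u, c *: v)] by apply/cls_eq/qr_teq/t2_bal.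
  exact: t2_refl.
- move=> c u v w; rewrite /Fmap /=.
  have -> : cls [:: (u, c *: v)] = c *: cls [:: (u, v)].
    by rewrite -cls_scale; apply/cls_eq/qr_teq; apply: t2_sym; apply: t2_bal.
  exact: t2_bal.
Qed.

Lemma cls_single_sum (W : lmodType k) (h : W) (s : seq (U * V)) :
  teq2 [seq (cls [:: q], h) | q <- s] [:: (cls s, h)].
Proof.
elim: s => [|q s IH] /=.
  by rewrite cls_nil; apply: t2_sym; apply: t2_zero.
apply: t2_trans (teq2_cons _ IH) _.
have -> : cls (q :: s) = cls [:: q] + cls s by rewrite -cls_add.
exact: t2_sym (t2_addl _ _ _).
Qed.

End Quot.

Definition teq_qrel (U V : lmodType k) : qrel U V :=
  @QRel U V (@teq2 k U V) (@t2_refl _ _ _) (@t2_sym _ _ _) (@t2_trans _ _ _)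
    (@t2_cat _ _ _) (fun s t h => h) (@teq2_scale _ _).

Section TensorQ.
Variables (U V : lmodType k).
Notation T := (Qt (teq_qrel U V)).

Lemma rep_tlinear : tlinear (@rep _ _ (teq_qrel U V)).
Proof.
move=> c X Y.
have -> : c *: X + Y = cls (teq_qrel U V) (tmap2 ( *:%R c) id (rep X) ++ rep Y).
  by rewrite cls_add cls_scale !cls_rep.
exact: (rep_cls (teq_qrel U V) _).
Qed.

Lemma Fmap_inv (W : lmodType k) (s t : seq (U * V * W)) :
  teq2 (Fmap (teq_qrel U V) s) (Fmap (teq_qrel U V) t) -> teq3 s t.
Proof.
have key : forall s0 : seq (U * V * W), teq3 (Bmap (@rep _ _ (teq_qrel U V)) (Fmap _ s0)) s0.
  elim=> [|[[u v] w] s0 IH] /=; first exact: t3_refl.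
  rewrite /Bmap /= -[_ :: s0]cat1s; apply: t3_cat; last exact: IH.
  have := teq2_to3 w (rep_cls (teq_qrel U V) [:: (u, v)]); by [].
move=> h; apply: t3_trans (t3_sym (key s)) _; apply: t3_trans _ (key t).
exact: Bmap_teq2 rep_tlinear _ _ h.
Qed.

End TensorQ.

Section TensorMap.
Variables (P V W : lmodType k) (f : P -> V).
Hypothesis hf : klinear f.

Definition Tmap (X : Qt (teq_qrel P W)) : Qt (teq_qrel V W) :=
  cls (teq_qrel V W) (tmap2 f id (rep X)).

Lemma Tmap_cls s : Tmap (cls _ s) = cls _ (tmap2 f id s).
Proof. apply/cls_eq; apply: teq2_map1 => //; exact: (rep_cls (teq_qrel P W) _). Qed.

Lemma Tmap_lin : klinear Tmap.
Proof.
move=> c X Y; rewrite -(cls_rep X) -(cls_rep Y).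
by rewrite -cls_scale -cls_add !Tmap_cls -cls_scale -cls_add tmap2_cat !tmap2_comp; congr cls;
   congr (_ ++ _); apply: tmap2_ext => x /=; rewrite (klinZ hf).
Qed.

Lemma Fmap_map (s : seq (P * W * W)) :
  Fmap (teq_qrel V W) [seq (f x.1.1, x.1.2, x.2) | x <- s] = tmap2 Tmap id (Fmap _ s).
Proof. by rewrite /Fmap /tmap2 -!map_comp; apply: eq_map => x /=; rewrite Tmap_cls. Qed.
End TensorMap.

Section Flat.
Variables (H : comAlgType k).
Hypothesis Hflat : flat_over H.

Lemma Tmap_inj (P V : lmodType k) (f : P -> V) : klinear f -> injective f ->
  injective (@Tmap P V H f).
Proof.
move=> hf fi X Y e; rewrite -(cls_rep X) -(cls_rep Y).
apply/(cls_eq (teq_qrel P H)).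
apply: (Hflat hf fi); apply/(cls_eq (teq_qrel V H)); exact: e.
Qed.

Lemma teq3_inj (P V : lmodType k) (f : P -> V) : klinear f -> injective f ->
  forall s t : seq (P * H * H),
  teq3 [seq (f x.1.1, x.1.2, x.2) | x <- s] [seq (f x.1.1, x.1.2, x.2) | x <- t] ->
  teq3 s t.
Proof.
move=> hf fi s t /(Fmap_teq3 (teq_qrel V H)); rewrite !Fmap_map // => h.
apply: Fmap_inv; exact: (Hflat (Tmap_lin hf) (Tmap_inj hf fi) h).
Qed.
End Flat.

End BC.

Section CC.
Variable k : comNzRingType.

Record spred (U : lmodType k) := SPred {
  sp :> U -> Prop;
  sp0 : sp 0;
  spD : forall x y, sp x -> sp y -> sp (x + y);
  spZ : forall c x, sp x -> sp (c *: x)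
}.

Section Sub.
Variables (U : lmodType k) (S : spred U).
Definition Subt := {x : U | S x}.
HB.instance Definition _ := gen_eqMixin Subt.
HB.instance Definition _ := gen_choiceMixin Subt.

Lemma Subt_ext (x y : Subt) : sval x = sval y -> x = y.
Proof.
case: x y => [x hx] [y hy] /= e; subst y; congr exist; exact: Prop_irrelevance.
Qed.

Lemma spN x : S x -> S (- x).
Proof. by move=> h; rewrite -scaleN1r; apply: spZ. Qed.

Definition sadd (x y : Subt) : Subt := exist _ _ (spD (svalP x) (svalP y)).
Definition sopp (x : Subt) : Subt := exist _ _ (spN (svalP x)).
Definition szero : Subt := exist _ _ (sp0 S).
Definition sscale (c : k) (x : Subt) : Subt := exist _ _ (spZ c (svalP x)).

Lemma saddA : associative sadd.
Proof. by move=> x y z; apply: Subt_ext; rewrite /= addrA. Qed.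
Lemma saddC : commutative sadd.
Proof. by move=> x y; apply: Subt_ext; rewrite /= addrC. Qed.
Lemma sadd0 : left_id szero sadd.
Proof. by move=> x; apply: Subt_ext; rewrite /= add0r. Qed.
Lemma saddN : left_inverse szero sopp sadd.
Proof. by move=> x; apply: Subt_ext; rewrite /= addNr. Qed.
HB.instance Definition _ := GRing.isZmodule.Build Subt saddA saddC sadd0 saddN.
Lemma sZA a b (x : Subt) : sscale a (sscale b x) = sscale (a * b) x.
Proof. by apply: Subt_ext; rewrite /= scalerA. Qed.
Lemma sZ1 : left_id 1 sscale.
Proof. by move=> x; apply: Subt_ext; rewrite /= scale1r. Qed.
Lemma sZDr : right_distributive sscale +%R.
Proof. by move=> c x y; apply: Subt_ext; rewrite /= scalerDr. Qed.
Lemma sZDl (x : Subt) : {morph sscale^~ x : a b / a + b}.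
Proof. by move=> a b; apply: Subt_ext; rewrite /= scalerDl. Qed.
HB.instance Definition _ := GRing.Zmodule_isLmodule.Build k Subt sZA sZ1 sZDr sZDl.

Definition sval_ (x : Subt) : U := sval x.
Lemma sval_lin : klinear sval_.
Proof. by []. Qed.
Lemma sval_inj : injective sval_.
Proof. exact: Subt_ext. Qed.
End Sub.

Definition inspan (U : lmodType k) (G : seq U) (x : U) : Prop :=
  exists c : 'I_(size G) -> k, x = \sum_(i < size G) c i *: G`_i.

Section Span.
Variable U : lmodType k.

Lemma inspan_ind (G : seq U) (P : U -> Prop) :
  P 0 -> (forall x y, P x -> P y -> P (x + y)) -> (forall c x, P x -> P (c *: x)) ->
  (forall j, (j < size G)%N -> P G`_j) -> forall x, inspan G x -> P x.
Proof.
move=> h0 hD hZ hm x [c ->]; elim/big_ind: _ => // i _.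
by apply: hZ; apply: hm.
Qed.

Lemma inspan0 (G : seq U) : inspan G 0.
Proof. by exists (fun=> 0); rewrite big1 // => i _; rewrite scale0r. Qed.
Lemma inspanD (G : seq U) x y : inspan G x -> inspan G y -> inspan G (x + y).
Proof.
move=> [c ->] [d ->]; exists (fun i => c i + d i); rewrite -big_split.
by apply: eq_bigr => i _; rewrite scalerDl.
Qed.
Lemma inspanZ (G : seq U) a x : inspan G x -> inspan G (a *: x).
Proof.
move=> [c ->]; exists (fun i => a * c i); rewrite scaler_sumr.
by apply: eq_bigr => i _; rewrite scalerA.
Qed.
Lemma inspanN (G : seq U) x : inspan G x -> inspan G (- x).
Proof. by move=> h; rewrite -scaleN1r; apply: inspanZ. Qed.
Lemma inspanB (G : seq U) x y : inspan G x -> inspan G y -> inspan G (x - y).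
Proof. by move=> hx hy; apply: inspanD => //; apply: inspanN. Qed.
Lemma inspan_mem (G : seq U) j : (j < size G)%N -> inspan G G`_j.
Proof.
move=> hj; exists (fun i => if i == Ordinal hj then 1 else 0).
rewrite (bigD1 (Ordinal hj)) //= eqxx scale1r big1 ?addr0 // => i /negbTE ->.
by rewrite scale0r.
Qed.
Lemma inspan_sum (G : seq U) (I : Type) (s : seq I) (F : I -> U) :
  (forall i, inspan G (F i)) -> inspan G (\sum_(i <- s) F i).
Proof.
move=> h; elim: s => [|a s IH]; first by rewrite big_nil; apply: inspan0.
by rewrite big_cons; apply: inspanD.
Qed.
Lemma inspan_sub (G G' : seq U) : (forall j, (j < size G)%N -> inspan G' G`_j) ->
  forall x, inspan G x -> inspan G' x.
Proof.
move=> h x hx; apply: (@inspan_ind G (inspan G')) hx => //.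
- exact: inspan0.
- by move=> *; apply: inspanD.
- by move=> *; apply: inspanZ.
Qed.
Lemma inspan_cons (a : U) (L : seq U) x : inspan (a :: L) x ->
  exists c y, inspan L y /\ x = c *: a + y.
Proof.
move=> hx; apply: (@inspan_ind (a :: L) (fun x => exists c y, inspan L y /\ x = c *: a + y)) hx.
- by exists 0, 0; split; [apply: inspan0 | rewrite scale0r addr0].
- move=> x1 y1 [c1 [z1 [h1 ->]]] [c2 [z2 [h2 ->]]]; exists (c1 + c2), (z1 + z2).
  split; first exact: inspanD.
  by rewrite scalerDl addrACA.
- move=> c x1 [c1 [z1 [h1 ->]]]; exists (c * c1), (c *: z1); split; first exact: inspanZ.
  by rewrite scalerDr scalerA.
- case=> [|j] /= hj.
    by exists 1, 0; split; [apply: inspan0 | rewrite scale1r addr0].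
  by exists 0, L`_j; split; [apply: inspan_mem | rewrite scale0r add0r].
Qed.
Lemma inspan_nil x : inspan ([::] : seq U) x -> x = 0.
Proof. by move=> [c ->]; rewrite big_ord0. Qed.

End Span.

Lemma noeth_sub (U : lmodType k) : noetherian k ->
  forall (L : seq U) (S : U -> Prop),
  S 0 -> (forall x y, S x -> S y -> S (x + y)) -> (forall c x, S x -> S (c *: x)) ->
  (forall x, S x -> inspan L x) ->
  exists G : seq U, (forall j, (j < size G)%N -> S G`_j) /\ (forall x, S x -> inspan G x).
Proof.
move=> hn; elim=> [|a L IH] S S0 SD SZ SL.
  exists [::]; split=> // x /SL /inspan_nil ->; exact: inspan0.
pose J (c : k) := exists y, S y /\ inspan L (y - c *: a).
have hJ : is_ideal J.
  split.
  - by exists 0; split => //; rewrite scale0r subr0; apply: inspan0.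
  - move=> x y [y1 [s1 h1]] [y2 [s2 h2]]; exists (y1 + y2); split; first exact: SD.
    by rewrite scalerDl opprD addrACA; apply: inspanD.
  - move=> c x [y1 [s1 h1]]; exists (c *: y1); split; first exact: SZ.
    by rewrite -scalerA -scalerBr; apply: inspanZ.
have [gs hgs] := hn J hJ.
pose yf (c : k) : U := if pselect (J c) is left h then sval (cid h) else 0.
have hyf c : J c -> S (yf c) /\ inspan L (yf c - c *: a).
  rewrite /yf; case: pselect => // h _; case: (cid h) => y [hy1 hy2] /=; by split.
have Jg j : (j < size gs)%N -> J gs`_j.
  move=> hj; apply/hgs; exists (fun i => if i == Ordinal hj then 1 else 0).
  rewrite (bigD1 (Ordinal hj)) //= eqxx mul1r big1 ?addr0 // => i /negbTE ->.
  by rewrite mul0r.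
pose S' y := S y /\ inspan L y.
have [G' [hG'1 hG'2]] := IH S' (conj S0 (inspan0 _))
  (fun x y hx hy => conj (SD _ _ hx.1 hy.1) (inspanD hx.2 hy.2))
  (fun c x hx => conj (SZ c _ hx.1) (inspanZ c hx.2)) (fun x hx => hx.2).
exists (G' ++ map yf gs); split.
  move=> j hj2; rewrite size_cat size_map in hj2; rewrite nth_cat.
  case: ltnP => hj1; first exact: (hG'1 _ hj1).1.
  have hj3 : (j - size G' < size gs)%N by rewrite ltn_subLR.
  rewrite (nth_map 0) //; exact: (hyf _ (Jg _ hj3)).1.
have SN x : S x -> S (- x) by move=> hx; rewrite -scaleN1r; apply: SZ.
have Ssum (I : Type) (s : seq I) (F : I -> U) : (forall i, S (F i)) -> S (\sum_(i <- s) F i).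
  move=> h; elim: s => [|b s IHs]; first by rewrite big_nil.
  by rewrite big_cons; apply: SD.
have inG j : (j < size gs)%N -> inspan (G' ++ map yf gs) (yf gs`_j).
  move=> hj; have -> : yf gs`_j = (G' ++ map yf gs)`_(size G' + j).
    by rewrite nth_cat ltnNge leq_addr /= addKn (nth_map 0).
  by apply: inspan_mem; rewrite size_cat size_map ltn_add2l.
move=> x hx; have [c [y [hy ex]]] := inspan_cons (SL _ hx).
have Jc : J c by exists x; split => //; rewrite ex addrAC subrr add0r.
have [d hd] := (hgs c).1 Jc.
pose z := x - \sum_(i < size gs) d i *: yf gs`_i.
have hz : S' z.
  split.
    apply: (SD) => //; apply: (SN); apply: (big_ind S) => //.
    by move=> i _; apply: SZ; exact: (hyf _ (Jg _ (ltn_ord i))).1.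
  have -> : z = (x - c *: a) - \sum_(i < size gs) d i *: (yf gs`_i - gs`_i *: a).
    have e : \sum_(i < size gs) d i *: (yf gs`_i - gs`_i *: a) =
        \sum_(i < size gs) d i *: yf gs`_i - (\sum_(i < size gs) d i * gs`_i) *: a.
      by rewrite scaler_suml -sumrB; apply: eq_bigr => i _; rewrite scalerBr scalerA.
    by rewrite /z e -hd opprB addrA subrK.
  apply: inspanB; first by rewrite ex addrAC subrr add0r.
  apply: (big_ind (inspan L)); [exact: inspan0 | by move=> *; apply: inspanD | move=> i _].
  apply: inspanZ; exact: (hyf _ (Jg _ (ltn_ord i))).2.
have -> : x = z + \sum_(i < size gs) d i *: yf gs`_i by rewrite /z subrK.
apply: inspanD.
  apply: (inspan_sub _ (hG'2 _ hz)) => j hj.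
  have -> : G'`_j = (G' ++ map yf gs)`_j by rewrite nth_cat hj.
  by apply: inspan_mem; rewrite size_cat (leq_trans hj) // leq_addr.
apply: (big_ind (inspan _)); [exact: inspan0 | by move=> *; apply: inspanD | move=> i _].
apply: inspanZ; exact: inG.
Qed.

End CC.

Section RE.
Variable k : comNzRingType.
Variables (Pm Um Dm A : lmodType k) (pi : Um -> Dm) (iota : Pm -> Um).
Hypotheses (hpi : klinear pi) (hio : klinear iota).
Hypothesis pi_surj : forall d, exists u, pi u = d.
Hypothesis pi_ker : forall u, pi u = 0 -> exists p, iota p = u.

Definition Rr (s t : seq (Um * A)) :=
  exists p p' : seq (Pm * A), teq2 (s ++ tmap2 iota id p) (t ++ tmap2 iota id p').

Lemma Rr_teq s t : teq2 s t -> Rr s t.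
Proof. by move=> h; exists [::], [::]; rewrite /= !cats0. Qed.
Lemma Rr_sym s t : Rr s t -> Rr t s.
Proof. by move=> [p [p' h]]; exists p', p; apply: t2_sym. Qed.
Lemma Rr_trans s t u : Rr s t -> Rr t u -> Rr s u.
Proof.
move=> [p [p' h1]] [q [q' h2]]; exists (p ++ q), (q' ++ p').
rewrite !tmap2_cat !catA.
apply: t2_trans (teq2_catr _ h1) _.
rewrite -catA; apply: t2_trans (teq2_catl _ (teq2_comm _ _)) _; rewrite catA.
exact: teq2_catr.
Qed.
Lemma Rr_cat s1 t1 s2 t2 : Rr s1 t1 -> Rr s2 t2 -> Rr (s1 ++ s2) (t1 ++ t2).
Proof.
move=> [p [p' h1]] [q [q' h2]]; exists (p ++ q), (p' ++ q').
rewrite !tmap2_cat; apply: t2_trans (teq2_mid _ _ _ _) _.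
apply: t2_trans _ (t2_sym (teq2_mid _ _ _ _)); exact: t2_cat.
Qed.

Lemma Rr_same s t : tmap2 pi id s = tmap2 pi id t -> Rr s t.
Proof.
elim: s t => [|[u a] s IH] [|[u' a'] t] //=; first by move=> _; apply: Rr_teq; apply: t2_refl.
case=> e1 e2 e3; subst a'.
apply: (@Rr_cat [:: (u, a)] [:: (u', a)]); last exact: IH.
have [p hp] : exists p, iota p = u - u'.
  by apply: pi_ker; rewrite (klinD hpi) (klinN hpi) e1 subrr.
exists [::], [:: (p, a)]; rewrite /= hp.
apply: t2_sym; apply: t2_trans (t2_sym (t2_addl _ _ _)) _.
by rewrite addrC subrK; apply: t2_refl.
Qed.

Definition liftS (x : seq (Dm * A)) : seq (Um * A) :=
  [seq (sval (cid (pi_surj p.1)), p.2) | p <- x].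
Lemma liftS_spec x : tmap2 pi id (liftS x) = x.
Proof.
rewrite /liftS /tmap2 -map_comp; rewrite -[RHS]map_id; apply: eq_map => -[d a] /=.
by case: (cid _) => u /= ->.
Qed.

Lemma Rr_main (x y : seq (Dm * A)) : teq2 x y ->
  forall s t, tmap2 pi id s = x -> tmap2 pi id t = y -> Rr s t.
Proof.
have via (x0 y0 : seq (Dm * A)) s0 t0 : tmap2 pi id s0 = x0 -> tmap2 pi id t0 = y0 -> Rr s0 t0 ->
    forall s t, tmap2 pi id s = x0 -> tmap2 pi id t = y0 -> Rr s t.
  move=> h1 h2 h s t e1 e2; apply: Rr_trans (Rr_same _) (Rr_trans h (Rr_same _)).
    by rewrite e1 h1.
  by rewrite e2 h2.
elim => {x y}.
- by move=> x s t e1 e2; apply: Rr_same; rewrite e1 e2.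
- by move=> x y _ IH s t e1 e2; apply: Rr_sym; apply: IH.
- move=> x y z _ IH1 _ IH2 s t e1 e2.
  exact: Rr_trans (IH1 _ _ e1 (liftS_spec y)) (IH2 _ _ (liftS_spec y) e2).
- move=> s1 t1 s2 t2 _ IH1 _ IH2 s t e1 e2.
  rewrite -(cat_take_drop (size s1) s) -(cat_take_drop (size t1) t).
  have hs : tmap2 pi id s = s1 ++ s2 := e1.
  have ht : tmap2 pi id t = t1 ++ t2 := e2.
  apply: Rr_cat.
    apply: IH1; rewrite /tmap2 map_take.
      by rewrite [map _ _]hs take_size_cat.
    by rewrite [map _ _]ht take_size_cat.
  apply: IH2; rewrite /tmap2 map_drop.
    by rewrite [map _ _]hs drop_size_cat.
  by rewrite [map _ _]ht drop_size_cat.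
- move=> a b; apply: (via _ _ (liftS [:: a; b]) (liftS [:: b; a])); try exact: liftS_spec.
  exact/Rr_teq/t2_swap.
- move=> v; apply: (via _ _ [:: (0, v)] [::]) => //.
    by rewrite /tmap2 /= klin0.
  exact/Rr_teq/t2_zero.
- move=> d d' v; have [u hu] := pi_surj d; have [u' hu'] := pi_surj d'.
  apply: (via _ _ [:: (u + u', v)] [:: (u, v); (u', v)]).
  + by rewrite /tmap2 /= (klinD hpi) hu hu'.
  + by rewrite /tmap2 /= hu hu'.
  + exact/Rr_teq/t2_addl.
- move=> d v v'; have [u hu] := pi_surj d.
  apply: (via _ _ [:: (u, v + v')] [:: (u, v); (u, v')]).
  + by rewrite /tmap2 /= hu.
  + by rewrite /tmap2 /= hu.
  + exact/Rr_teq/t2_addr.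
- move=> c d v; have [u hu] := pi_surj d.
  apply: (via _ _ [:: (c *: u, v)] [:: (u, c *: v)]).
  + by rewrite /tmap2 /= (klinZ hpi) hu.
  + by rewrite /tmap2 /= hu.
  + exact/Rr_teq/t2_bal.
Qed.

Lemma right_exact (t : seq (Um * A)) : teq2 (tmap2 pi id t) [::] ->
  exists t' : seq (Pm * A), teq2 t (tmap2 iota id t').
Proof.
move=> h; have [p [p' hp]] := Rr_main h (erefl (tmap2 pi id t)) (erefl (tmap2 pi id ([::] : seq (Um * A)))).
exists (p' ++ tmap2 (fun x => - x) id p); rewrite tmap2_cat /=.
have -> : tmap2 iota id (tmap2 (fun x => - x) id p) = tmap2 (fun x => - x) id (tmap2 iota id p).
  by rewrite /tmap2 -!map_comp; apply: eq_map => x /=; rewrite (klinN hio).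
apply: t2_trans (_ : teq2 ((t ++ tmap2 iota id p) ++ tmap2 (fun x => - x) id (tmap2 iota id p)) _).
  rewrite -catA -{1}[t]cats0; apply: teq2_catl; apply: t2_sym.
  apply: t2_trans (teq2_comm _ _) (teq2_neg _).
exact: teq2_catr.
Qed.

End RE.

Section DS.
Variables (k : comNzRingType) (H : comAlgType k) (K : hopf H) (I : Type) (V : I -> comod K).
Notation Vc := (fun i => cm_car (V i)).
Notation DS := (dsum Vc).
Definition inj i (v : V i) : DS := @dinj k I Vc i v.
Definition prj i (x : DS) : V i := dproj i x.
Notation rho := (@cm_co _ _ K _).
Notation dco := (@dsum_co _ _ K I V).

Lemma rho_lin i : tlinear (@cm_co _ _ K (V i)).
Proof. by case: (cm_coP (V i)). Qed.
Lemma rho_coassoc i (v : V i) :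
  teq3 (Bmap (@cm_co _ _ K (V i)) (rho v)) (Cmap (comul K) (rho v)).
Proof. by case: (cm_coP (V i)) => _ h _; exact: h. Qed.
Lemma rho_counit i (v : V i) : \sum_(p <- rho v) counit K p.2 *: p.1 = v.
Proof. by case: (cm_coP (V i)). Qed.

Lemma prj_lin i : klinear (@prj i).
Proof. by []. Qed.

Lemma inj_fun_lin i j : klinear (fun v : V i => @dinj_fun k I Vc i v j).
Proof.
move=> c x y; rewrite /dinj_fun; case: pselect => [e|ne]; last by rewrite scaler0 addr0.
by case: j / e.
Qed.
Lemma inj_lin i : klinear (@inj i).
Proof. by move=> c x y; apply: dsum_ext => j /=; apply: inj_fun_lin. Qed.

Lemma prj_inj i (v : V i) : prj i (inj v) = v.
Proof.
rewrite /prj /inj /dproj /= /dinj_fun; case: pselect => // e.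
by have -> : e = erefl by apply: Prop_irrelevance.
Qed.
Lemma prj_inj_ne i j (v : V i) : i <> j -> prj j (inj v) = 0.
Proof. by move=> ne; rewrite /prj /inj /dproj /= /dinj_fun; case: pselect. Qed.

Lemma sval_sum (J : Type) (s : seq J) (F : J -> DS) j :
  sval (\sum_(a <- s) F a) j = \sum_(a <- s) sval (F a) j.
Proof.
elim: s => [|a s IH]; first by rewrite !big_nil.
by rewrite !big_cons -IH.
Qed.

Definition slist (x : DS) : seq I := sval (cid (svalP x)).
Lemma slist_spec x i : ~ List.In i (slist x) -> sval x i = 0.
Proof. rewrite /slist; case: (cid _) => s hs /=; exact: hs. Qed.

Lemma dsupp_nodup (x : DS) : List.NoDup (dsupp x).
Proof. exact: List.NoDup_nodup. Qed.
Lemma dsupp_cover (x : DS) i : ~ List.In i (dsupp x) -> sval x i = 0.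
Proof.
move=> h; apply: slist_spec => h'; apply: h; rewrite /dsupp.
by apply/List.nodup_In.
Qed.

Lemma tmap2_prj_inj_ne i j (s : seq (V i * H)) : i <> j ->
  teq2 (tmap2 (@prj j) id (tmap2 (@inj i) id s)) [::].
Proof.
move=> ne; rewrite tmap2_comp; elim: s => [|[v h] s IH] /=; first exact: t2_refl.
have e : @dinj_fun k I Vc i v j = 0 := prj_inj_ne v ne.
rewrite e; exact: (t2_cat (t2_zero _ _) IH).
Qed.
Lemma tmap2_prj_inj i (s : seq (V i * H)) :
  tmap2 (@prj i) id (tmap2 (@inj i) id s) = s.
Proof. by rewrite tmap2_comp (@tmap2_ext _ _ _ _ _ id) ?tmap2_id // => v; apply: prj_inj. Qed.

Lemma proj_flat (f : DS) (j : I) (J : seq I) : List.NoDup J ->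
  (List.In j J -> teq2 (tmap2 (@prj j) id
      (flatten [seq tmap2 (@inj i) id (rho (prj i f)) | i <- J])) (rho (prj j f))) /\
  (~ List.In j J -> teq2 (tmap2 (@prj j) id
      (flatten [seq tmap2 (@inj i) id (rho (prj i f)) | i <- J])) [::]).
Proof.
elim: J => [|i J IH] hnd /=; first by split=> // _; apply: t2_refl.
have [hi hnd'] : ~ List.In i J /\ List.NoDup J by inversion hnd.
have [IH1 IH2] := IH hnd'.
rewrite tmap2_cat; case: (pselect (i = j)) => [e|ne].
  subst i; split=> hj.
    rewrite tmap2_prj_inj -[X in teq2 _ X]cats0; apply: teq2_catl; exact: IH2.
  by exfalso; apply: hj; left.
split.
  case=> // hj; rewrite -[X in teq2 _ X]cat0s; apply: t2_cat; last exact: IH1.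
  exact: tmap2_prj_inj_ne.
move=> hj; rewrite -[X in teq2 _ X]cat0s; apply: t2_cat.
  exact: tmap2_prj_inj_ne.
by apply: IH2 => h; apply: hj; right.
Qed.

Lemma dco_proj (f : DS) j : teq2 (tmap2 (@prj j) id (dco f)) (rho (prj j f)).
Proof.
have [h1 h2] := proj_flat f j (dsupp_nodup f).
case: (pselect (List.In j (dsupp f))) => h; first exact: h1.
apply: t2_trans (h2 h) _; apply: t2_sym.
have -> : prj j f = 0 by apply: dsupp_cover.
exact: (tl_0 (@rho_lin j)).
Qed.

Lemma sum_inj_val (x : DS) (J : seq I) j : List.NoDup J ->
  sval (\sum_(i <- J) inj (prj i x)) j = if pselect (List.In j J) then sval x j else 0.
Proof.
rewrite sval_sum; elim: J => [|i J IH] hnd; first by rewrite big_nil; case: pselect.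
have [hi hnd'] : ~ List.In i J /\ List.NoDup J by inversion hnd.
rewrite big_cons IH //; rewrite /= /dinj_fun.
case: (pselect (i = j)) => [e|ne].
  clear IH; case: j / e => /=.
  case: (pselect (List.In i J)) => h1; first by exfalso; apply: hi.
  case: (pselect (i = i \/ List.In i J)) => h2; first by rewrite addr0.
  by exfalso; apply: h2; left.
case: (pselect (List.In j J)) => [h1|h1]; case: (pselect (i = j \/ List.In j J)) => [h2|h2].
- by rewrite add0r.
- by exfalso; apply: h2; right.
- by exfalso; case: h2 => // e; apply: ne.
- by rewrite addr0.
Qed.

Lemma decomp (x : DS) (J : seq I) : List.NoDup J ->
  (forall i, ~ List.In i J -> sval x i = 0) -> x = \sum_(i <- J) inj (prj i x).
Proof.
move=> hnd hc; apply: dsum_ext => j; rewrite sum_inj_val //.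
by case: pselect => // h; rewrite hc.
Qed.

Lemma teq2_sum_split (M W : lmodType k) (J : Type) (F : J -> M) (h : W) (s : seq J) :
  teq2 [:: (\sum_(a <- s) F a, h)] [seq (F a, h) | a <- s].
Proof.
elim: s => [|a s IH]; first by rewrite big_nil; apply: t2_zero.
rewrite big_cons /=; apply: t2_trans (t2_addl _ _ _) _; exact: teq2_cons.
Qed.

Lemma flatten_single (A B : Type) (F : A -> B) (s : seq A) :
  flatten [seq [:: F a] | a <- s] = map F s.
Proof. by elim: s => //= a s ->. Qed.

Lemma decomp_seq (s : seq (DS * H)) (J : seq I) : List.NoDup J ->
  (forall x, List.In x s -> forall i, ~ List.In i J -> sval x.1 i = 0) ->
  teq2 s (flatten [seq tmap2 (@inj i) id (tmap2 (@prj i) id s) | i <- J]).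
Proof.
move=> hnd; elim: s => [|[x h] s IH] hc /=.
  by apply: t2_sym; apply: teq2_flatten_nil => i _; apply: t2_refl.
apply: t2_trans (_ : teq2 (flatten [seq [:: (inj (prj i x), h)] | i <- J] ++
     flatten [seq tmap2 (@inj i) id (tmap2 (@prj i) id s) | i <- J]) _); last first.
  by apply: t2_sym; apply: (teq2_flattenD (fun i => [:: (inj (prj i x), h)])).
rewrite -cat1s; apply: t2_cat; last by apply: IH => y hy; apply: hc; right.
rewrite flatten_single; apply: t2_trans _ (teq2_sum_split _ _ _).
rewrite -decomp //; first exact: t2_refl.
by move=> i hi; apply: (hc (x, h)) => //; left.
Qed.

Definition slists (s : seq (DS * H)) : seq I := flatten [seq slist x.1 | x <- s].
Lemma slists_cover (s : seq (DS * H)) x i : List.In x s -> ~ List.In i (slists s) -> sval x.1 i = 0.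
Proof.
move=> hx hi; apply: slist_spec => h; apply: hi.
elim: s hx => // y s IH /= [e|hy]; apply: List.in_or_app; [by left; rewrite e | right; exact: IH].
Qed.

Lemma detect (s t : seq (DS * H)) :
  (forall j, teq2 (tmap2 (@prj j) id s) (tmap2 (@prj j) id t)) -> teq2 s t.
Proof.
move=> h; pose J := List.nodup (@Idec I) (slists (s ++ t)).
have hnd : List.NoDup J by apply: List.NoDup_nodup.
have cov (u : seq (DS * H)) : (forall x, List.In x u -> List.In x (s ++ t)) ->
    forall x, List.In x u -> forall i, ~ List.In i J -> sval x.1 i = 0.
  move=> hu x hx i hi; apply: (slists_cover (hu _ hx)) => h'; apply: hi.
  by apply/List.nodup_In.
apply: t2_trans (decomp_seq hnd (cov s _)) _.
  by move=> x hx; apply: List.in_or_app; left.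
apply: t2_trans _ (t2_sym (decomp_seq hnd (cov t _))); last first.
  by move=> x hx; apply: List.in_or_app; right.
apply: teq2_flatten => i _; apply: teq2_map1; [exact: inj_lin | exact: h].
Qed.

Lemma dco_inj i (v : V i) : teq2 (dco (inj v)) (tmap2 (@inj i) id (rho v)).
Proof.
apply: detect => j; apply: t2_trans (dco_proj _ _) _.
case: (pselect (i = j)) => [e|ne].
  subst j; rewrite tmap2_prj_inj prj_inj; exact: t2_refl.
rewrite prj_inj_ne //; apply: t2_trans (tl_0 (@rho_lin j)) _.
apply: t2_sym; exact: tmap2_prj_inj_ne.
Qed.

Lemma dco_lin : tlinear dco.
Proof.
move=> c x y; apply: detect => j; apply: t2_trans (dco_proj _ _) _.
rewrite tmap2_cat tmap2_comp.
rewrite (@tmap2_ext _ _ _ _ _ (( *:%R c) \o @prj j)) //.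
rewrite -tmap2_comp; apply: t2_trans (@rho_lin j c _ _) _.
apply: t2_cat; last exact: t2_sym (dco_proj _ _).
apply: teq2_map1; [exact: klin_scale | exact: t2_sym (dco_proj _ _)].
Qed.

Lemma dco_counit (f : DS) : \sum_(p <- dco f) counit K p.2 *: p.1 = f.
Proof.
apply: dsum_ext => j; rewrite sval_sum.
have -> : \sum_(p <- dco f) sval (counit K p.2 *: p.1) j =
          \sum_(p <- tmap2 (@prj j) id (dco f)) counit K p.2 *: p.1.
  by rewrite /tmap2 big_map.
rewrite (teq2_sum _ _ _ _ (dco_proj f j)); first exact: rho_counit.
- by move=> v /=; rewrite scaler0.
- by move=> u u' v /=; rewrite scalerDr.
- move=> u v v' /=; rewrite -scalerDl.
  by have := counit_lin K 1 v v'; rewrite scale1r mul1r => ->.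
- move=> c u v /=; rewrite scalerA.
  have -> : counit K (c *: v) = c * counit K v.
    have := counit_lin K c v 0; rewrite addr0 => ->.
    have e0 : counit K 0 = 0.
      have := counit_lin K 1 0 0; rewrite scale1r addr0 mul1r => e.
      by apply: (addrI (counit K 0)); rewrite addr0 -e.
    by rewrite e0 addr0.
  by rewrite mulrC.
Qed.

Lemma map_inj1_B i (s : seq (V i * H)) :
  teq3 (Bmap dco (tmap2 (@inj i) id s))
       [seq (inj x.1.1, x.1.2, x.2) | x <- Bmap (@cm_co _ _ K (V i)) s].
Proof.
rewrite /Bmap map_flatten -!map_comp; apply: teq3_flatten => p _ /=.
apply: t3_trans (teq2_to3 p.2 (dco_inj p.1)) _.
by rewrite /tmap2 -!map_comp; apply: t3_refl.
Qed.

Lemma flatten_map_flatten (X Y : Type) (F : X -> seq Y) (L : seq (seq X)) :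
  flatten (map F (flatten L)) = flatten (map (fun l => flatten (map F l)) L).
Proof. by elim: L => //= l L IH; rewrite map_cat flatten_cat IH. Qed.

Lemma Cmap_inj i (s : seq (V i * H)) :
  Cmap (comul K) (tmap2 (@inj i) id s) =
  [seq (inj x.1.1, x.1.2, x.2) | x <- Cmap (comul K) s].
Proof. by rewrite /Cmap map_flatten /tmap2 -!map_comp; congr flatten; apply: eq_map => p /=; rewrite -map_comp. Qed.

Lemma dco_coassoc (f : DS) : teq3 (Bmap dco (dco f)) (Cmap (comul K) (dco f)).
Proof.
have -> : dco f = flatten [seq tmap2 (@inj i) id (rho (prj i f)) | i <- dsupp f] by [].
rewrite {1}/Bmap /Cmap !flatten_map_flatten -!map_comp.
apply: teq3_flatten => i _ /=.
apply: t3_trans (map_inj1_B _) _.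
have -> : flatten [seq [seq (p.1, q.1, q.2) | q <- comul K p.2]
              | p <- tmap2 (@inj i) id (rho (prj i f))] =
          Cmap (comul K) (tmap2 (@inj i) id (rho (prj i f))) by [].
rewrite Cmap_inj; apply: teq3_map1; first exact: inj_lin.
exact: rho_coassoc.
Qed.

Lemma dco_coaction : is_coaction K dco.
Proof. split; [exact: dco_lin | exact: dco_coassoc | exact: dco_counit]. Qed.

Lemma prj_hom i : is_hom dco (@cm_co _ _ K (V i)) (@prj i).
Proof. by split; [exact: prj_lin | move=> v; exact: dco_proj]. Qed.

End DS.

Section LF.
Variables (k : comNzRingType) (H : comAlgType k) (K : hopf H).
Hypothesis hn : noetherian k.
Hypothesis Hflat : flat_over H.

Lemma counit0 : counit K 0 = 0.
Proof.
have := counit_lin K 1 0 0; rewrite scale1r addr0 mul1r => e.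
by apply: (addrI (counit K 0)); rewrite addr0 -e.
Qed.

Lemma counit_sum_teq (U : lmodType k) (s t : seq (U * H)) : teq2 s t ->
  \sum_(p <- s) counit K p.2 *: p.1 = \sum_(p <- t) counit K p.2 *: p.1.
Proof.
apply: (teq2_sum (phi := fun p : U * H => counit K p.2 *: p.1)).
- by move=> v /=; rewrite scaler0.
- by move=> u u' v /=; rewrite scalerDr.
- move=> u v v' /=; rewrite -scalerDl.
  by have := counit_lin K 1 v v'; rewrite scale1r mul1r => ->.
- move=> c u v /=; rewrite scalerA.
  have -> : counit K (c *: v) = c * counit K v.
    by have := counit_lin K c v 0; rewrite addr0 => ->; rewrite counit0 addr0.
  by rewrite mulrC.
Qed.

Lemma Rr_scale (Pm Um A : lmodType k) (iota : Pm -> Um) : klinear iota ->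
  forall c (s t : seq (Um * A)), Rr iota s t -> Rr iota (tmap2 ( *:%R c) id s) (tmap2 ( *:%R c) id t).
Proof.
move=> hio c s t [p [p' h]]; exists (tmap2 ( *:%R c) id p), (tmap2 ( *:%R c) id p').
have e q : tmap2 iota id (tmap2 ( *:%R c) id q) = tmap2 ( *:%R c) id (tmap2 iota id q).
  by rewrite !tmap2_comp; apply: tmap2_ext => x /=; rewrite (klinZ hio).
rewrite !e -!tmap2_cat; apply: teq2_map1 => //; exact: klin_scale.
Qed.

Definition Rrel (Pm Um A : lmodType k) (iota : Pm -> Um) (hio : klinear iota) : qrel Um A :=
  @QRel _ _ _ (Rr iota) (fun s => Rr_teq iota (t2_refl s)) (@Rr_sym _ _ _ _ iota)
    (@Rr_trans _ _ _ _ iota) (@Rr_cat _ _ _ _ iota) (@Rr_teq _ _ _ _ iota)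
    (Rr_scale hio).

Lemma Rr_nil (Pm Um A : lmodType k) (iota : Pm -> Um) : klinear iota ->
  forall s : seq (Um * A), Rr iota s [::] -> exists t, teq2 s (tmap2 iota id t).
Proof.
move=> hio s [p [p' hp]].
exists (p' ++ tmap2 (fun x => - x) id p); rewrite tmap2_cat /=.
have -> : tmap2 iota id (tmap2 (fun x => - x) id p) = tmap2 (fun x => - x) id (tmap2 iota id p).
  by rewrite /tmap2 -!map_comp; apply: eq_map => x /=; rewrite (klinN hio).
apply: t2_trans (_ : teq2 ((s ++ tmap2 iota id p) ++ tmap2 (fun x => - x) id (tmap2 iota id p)) _).
  rewrite -catA -{1}[s]cats0; apply: teq2_catl; apply: t2_sym.
  apply: t2_trans (teq2_comm _ _) (teq2_neg _).
exact: teq2_catr.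
Qed.

Lemma inspan_map_inv (U U' : lmodType k) (f : U -> U') (G : seq U) x :
  klinear f -> injective f -> inspan (map f G) (f x) -> inspan G x.
Proof.
move=> hf fi h.
have : exists y, inspan G y /\ f x = f y.
  apply: (@inspan_ind _ _ (map f G) (fun z => exists y, inspan G y /\ z = f y)) h.
  - by exists 0; split; [apply: inspan0 | rewrite klin0].
  - move=> a b [y1 [h1 ->]] [y2 [h2 ->]]; exists (y1 + y2).
    by split; [apply: inspanD | rewrite klinD].
  - move=> c a [y1 [h1 ->]]; exists (c *: y1).
    by split; [apply: inspanZ | rewrite (klinZ hf)].
  - move=> j; rewrite size_map => hj; exists G`_j; split; first exact: inspan_mem.
    by rewrite (nth_map 0).
by case=> y [hy /fi ->].
Qed.

Section Point.
Variables (W : comod K) (w : W).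
Notation rho := (@cm_co _ _ K W).

Lemma rhoW_lin : tlinear rho.
Proof. by case: (cm_coP W). Qed.
Lemma rhoW_coassoc (v : W) : teq3 (Bmap rho (rho v)) (Cmap (comul K) (rho v)).
Proof. by case: (cm_coP W) => _ h _; exact: h. Qed.
Lemma rhoW_counit (v : W) : \sum_(p <- rho v) counit K p.2 *: p.1 = v.
Proof. by case: (cm_coP W). Qed.

Definition L := map fst (rho w).
Definition Nsp : spred W :=
  @SPred _ _ (inspan L) (inspan0 L) (fun x y => @inspanD _ _ L x y) (fun c x => @inspanZ _ _ L c x).
Definition N := Subt Nsp.
Definition iN : N -> W := @sval_ _ _ Nsp.
Lemma iN_lin : klinear iN.
Proof. exact: sval_lin. Qed.

Definition Mrel := @Rrel N W H iN iN_lin.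
Definition M := Qt Mrel.
Definition phi (n : N) : M := cls Mrel (rho (iN n)).
Lemma phi_lin : klinear phi.
Proof.
move=> c x y; rewrite /phi -cls_scale -cls_add; apply/cls_eq.
apply: Rr_teq; exact: rhoW_lin.
Qed.

Definition Dsp : spred M.
Proof.
refine (@SPred _ _ (fun m => exists n, m = phi n) _ _ _).
- by exists 0; rewrite -(klin0 phi_lin).
- by move=> x y [n1 ->] [n2 ->]; exists (n1 + n2); rewrite (klinD phi_lin).
- by move=> c x [n1 ->]; exists (c *: n1); rewrite (klinZ phi_lin).
Defined.
Definition D := Subt Dsp.
Definition iD : D -> M := @sval_ _ _ Dsp.
Definition pi (n : N) : D := exist _ (phi n) (ex_intro _ n erefl).
Lemma pi_lin : klinear pi.
Proof. by move=> c x y; apply: Subt_ext => /=; apply: phi_lin. Qed.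
Lemma pi_surj d : exists n, pi n = d.
Proof. by case: d => m [n e]; exists n; apply: Subt_ext => /=; rewrite e. Qed.

Definition Pp (v : W) := inspan L v /\ exists t : seq (N * H), teq2 (rho v) (tmap2 iN id t).
Definition Psp : spred W.
Proof.
refine (@SPred _ _ Pp _ _ _).
- split; first exact: inspan0.
  by exists [::]; exact: (tl_0 rhoW_lin).
- move=> x y [hx [t1 h1]] [hy [t2 h2]]; split; first exact: inspanD.
  exists (t1 ++ t2); rewrite tmap2_cat; apply: t2_trans (tl_add rhoW_lin _ _) _.
  exact: t2_cat.
- move=> c x [hx [t1 h1]]; split; first exact: inspanZ.
  exists (tmap2 ( *:%R c) id t1); apply: t2_trans (tl_scale rhoW_lin _ _) _.
  have -> : tmap2 iN id (tmap2 ( *:%R c) id t1) = tmap2 ( *:%R c) id (tmap2 iN id t1).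
    by rewrite !tmap2_comp.
  by apply: teq2_map1 => //; exact: klin_scale.
Defined.
Definition P := Subt Psp.
Definition iP : P -> W := @sval_ _ _ Psp.
Lemma iP_lin : klinear iP.
Proof. exact: sval_lin. Qed.
Lemma iP_inj : injective iP.
Proof. exact: sval_inj. Qed.
Definition iPN (p : P) : N := exist _ (iP p) (proj1 (svalP p)).
Lemma iPN_lin : klinear iPN.
Proof. by move=> c x y; apply: Subt_ext. Qed.

Lemma pi_ker n : pi n = 0 -> exists p, iPN p = n.
Proof.
move=> /(congr1 sval) /= e.
have : cls Mrel (rho (iN n)) = cls Mrel [::] := e.
move/cls_eq => /(Rr_nil iN_lin) [t ht].
have hp : Pp (iN n) by split; [exact: (svalP n) | exists t].
by exists (exist _ _ hp); apply: Subt_ext.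
Qed.

Lemma cls_iN_zero (n : N) (h : H) : cls Mrel [:: (iN n, h)] = 0.
Proof.
apply/cls_eq; exists [::], [:: (n, h)]; rewrite /=; exact: t2_refl.
Qed.

Lemma key (t : seq (N * H)) (v : W) : teq2 (rho v) (tmap2 iN id t) ->
  teq2 (tmap2 phi id t) [::].
Proof.
move=> ht.
have h3 : teq3 (Bmap rho (tmap2 iN id t)) (Cmap (comul K) (tmap2 iN id t)).
  have hb := Bmap_teq2 rhoW_lin ht.
  apply: t3_trans (t3_sym hb) _.
  apply: t3_trans (rhoW_coassoc v) _.
  have hc := Cmap_teq2 (comul_lin K) ht. exact hc.
have := Fmap_teq3 Mrel h3 => h2.
have css (s0 : seq (W * H)) (h : H) :
    teq2 (map (fun q => (cls Mrel [:: (q.1, q.2)], h)) s0) [:: (cls Mrel s0, h)].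
  have -> : map (fun q => (cls Mrel [:: (q.1, q.2)], h)) s0 = map (fun q => (cls Mrel [:: q], h)) s0.
    by apply: eq_map => -[a b].
  exact: cls_single_sum.
apply: t2_trans (t2_sym _) (t2_trans h2 _).
  rewrite /Fmap /Bmap map_flatten -!map_comp /tmap2.
  rewrite -[X in teq2 _ X](flatten_single (fun p : N * H => (phi p.1, p.2))).
  apply: teq2_flatten => p _ /=; rewrite -map_comp.
  exact (css (rho (iN p.1)) p.2).
rewrite /Fmap /Cmap map_flatten /tmap2 -!map_comp.
apply: teq2_flatten_nil => p _ /=; rewrite -map_comp.
elim: (comul K p.2) => [|q s IH] /=; first exact: t2_refl.
rewrite (cls_iN_zero p.1 q.1); exact: (t2_cat (t2_zero _ _) IH).
Qed.

Lemma coP (x : P) : exists t : seq (P * H), teq2 (rho (iP x)) (tmap2 iP id t).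
Proof.
have [_ [t ht]] := svalP x.
have h1 : teq2 (tmap2 pi id t) [::].
  have hD : klinear iD by exact: sval_lin.
  apply: (Hflat hD (@sval_inj _ _ Dsp)); rewrite tmap2_comp /=.
  exact: key ht.
have [t' ht'] := right_exact pi_lin iPN_lin pi_surj pi_ker h1.
exists t'; apply: t2_trans ht _.
have -> : tmap2 iP id t' = tmap2 iN id (tmap2 iPN id t') by rewrite tmap2_comp.
by apply: teq2_map1 => //; exact: iN_lin.
Qed.

Definition rhoP (x : P) : seq (P * H) := sval (cid (coP x)).
Lemma rhoP_spec x : teq2 (rho (iP x)) (tmap2 iP id (rhoP x)).
Proof. by rewrite /rhoP; case: (cid _). Qed.

Lemma rhoP_coaction : is_coaction K rhoP.
Proof.
split.
- move=> c x y; apply: (Hflat iP_lin iP_inj).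
  apply: t2_trans (t2_sym (rhoP_spec _)) _.
  have -> : iP (c *: x + y) = c *: iP x + iP y by [].
  apply: t2_trans (rhoW_lin _ _ _) _.
  rewrite tmap2_cat; apply: t2_cat; last exact: rhoP_spec.
  have -> : tmap2 iP id (tmap2 ( *:%R c) id (rhoP x)) =
            tmap2 ( *:%R c) id (tmap2 iP id (rhoP x)) by rewrite !tmap2_comp.
  by apply: teq2_map1; [exact: klin_scale | exact: rhoP_spec].
- move=> v; apply: (teq3_inj Hflat iP_lin iP_inj).
  have eB : [seq (iP x.1.1, x.1.2, x.2) | x <- Bmap rhoP (rhoP v)] =
            flatten [seq [seq (q.1, q.2, p.2) | q <- tmap2 iP id (rhoP p.1)] | p <- rhoP v].
    by rewrite /Bmap map_flatten -map_comp; congr flatten; apply: eq_map => p /=;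
       rewrite /tmap2 -!map_comp.
  have eC : [seq (iP x.1.1, x.1.2, x.2) | x <- Cmap (comul K) (rhoP v)] =
            Cmap (comul K) (tmap2 iP id (rhoP v)).
    by rewrite /Cmap map_flatten /tmap2 -!map_comp; congr flatten; apply: eq_map => p /=;
       rewrite -map_comp.
  rewrite eB eC.
  apply: (t3_trans (t := Bmap rho (tmap2 iP id (rhoP v)))).
    rewrite /Bmap /tmap2 -map_comp; apply: teq3_flatten => p _ /=.
    exact: teq2_to3 (t2_sym (rhoP_spec _)).
  have hb := Bmap_teq2 rhoW_lin (t2_sym (rhoP_spec v)).
  have hc := Cmap_teq2 (comul_lin K) (rhoP_spec v).
  apply: (t3_trans hb); apply: (t3_trans (rhoW_coassoc _)); exact hc.
- move=> v; apply: iP_inj.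
  rewrite (klin_sum iP_lin).
  have -> : \sum_(i <- rhoP v) iP (counit K i.2 *: i.1) =
            \sum_(p <- tmap2 iP id (rhoP v)) counit K p.2 *: p.1 by rewrite /tmap2 big_map.
  by rewrite -(counit_sum_teq (rhoP_spec v)) rhoW_counit.
Qed.

Definition Qc : comod K := @Comod _ _ K P rhoP rhoP_coaction.

Lemma Qc_hom : @Khom _ _ K Qc W iP.
Proof. by split; [exact: iP_lin | move=> q; exact: t2_sym (rhoP_spec q)]. Qed.

Lemma memL x : x \in L -> inspan L x.
Proof. by move=> hm; rewrite -(nth_index 0 hm); apply: inspan_mem; rewrite index_mem. Qed.

Lemma w_in : Pp w.
Proof.
split.
  rewrite -{1}(rhoW_counit w) big_seq.
  apply: (big_ind (inspan L)); [exact: inspan0 | by move=> *; apply: inspanD | move=> p hp].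
  by apply: inspanZ; apply: memL; apply: map_f.
pose liftN (v : W) : N := if pselect (inspan L v) is left h then exist _ v h else 0.
exists [seq (liftN p.1, p.2) | p <- rho w].
suff -> : tmap2 iN id [seq (liftN p.1, p.2) | p <- rho w] = rho w by apply: t2_refl.
rewrite /tmap2 -map_comp -[RHS]map_id; apply/eq_in_map => -[a b] hp /=.
rewrite /liftN; case: pselect => [h|h] //; exfalso; apply: h; apply: memL.
by have := map_f fst hp.
Qed.

Lemma Pfin : fin_gen P.
Proof.
have [G [hG1 hG2]] := @noeth_sub _ _ hn L Pp (sp0 Psp) (@spD _ _ Psp) (@spZ _ _ Psp)
  (fun x hx => proj1 hx).
pose lift (v : W) : P := if pselect (Pp v) is left h then exist _ v h else 0.
exists (map lift G) => m.
have e : map iP (map lift G) = G.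
  rewrite -map_comp -[RHS]map_id; apply/eq_in_map => x hx /=.
  rewrite /lift; case: pselect => [h|h] //; exfalso; apply: h.
  by rewrite -(nth_index 0 hx); apply: hG1; rewrite index_mem.
apply: (inspan_map_inv iP_lin iP_inj); rewrite e; apply: hG2; exact: (svalP m).
Qed.

End Point.

Lemma loc_fin (W : comod K) (w : W) :
  exists (Q : comod K) (iq : Q -> W), [/\ fin_gen Q, Khom iq & exists q, iq q = w].
Proof.
exists (Qc w), (@iP W w); split.
- exact: Pfin.
- exact: Qc_hom.
- by exists (exist _ w (w_in w)).
Qed.

End LF.

Theorem lemma4p1p1 (k : comNzRingType) (H : comAlgType k) (K : hopf H)
  (I : Type) (V : I -> comod K) :
  noetherian k ->
  flat_over H ->
  (forall Q : comod K, fin_gen Q ->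
     exists s : seq I, forall i, ~ List.In i s -> Hom_zero Q (V i)) ->
  is_Kproduct (dsum_co (V := V)) (fun i => @dproj k I (fun j => cm_car (V j)) i).
Proof.
move=> hn Hflat hyp; split.
- exact: dco_coaction.
- move=> i; exact: prj_hom.
move=> W f hf.
have fs : forall w : W, finsupp (fun i => f i w).
  move=> w; have [Q [iq [fg hq [q eq]]]] := loc_fin hn Hflat w.
  have [s hs] := hyp Q fg; exists s => i hi; rewrite -eq.
  apply: (hs i hi (f i \o iq)); split.
    exact: klin_comp (hq.1) (hf i).1.
  move=> v; rewrite /tmap2 /=.
  have -> : [seq ((f i \o iq) p.1, p.2) | p <- cm_co v] =
            tmap2 (f i) id (tmap2 iq id (cm_co v)) by rewrite tmap2_comp.
  apply: t2_trans (teq2_map1 (hf i).1 (hq.2 v)) _; exact: (hf i).2.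
pose g (w : W) : dsum (fun j => cm_car (V j)) := exist _ (fun i => f i w) (fs w).
exists g; split.
- split.
    by move=> c x y; apply: dsum_ext => i /=; apply: (hf i).1.
  move=> v; apply: detect => j; apply: t2_trans _ (t2_sym (dco_proj _ _)).
  rewrite tmap2_comp; exact: (hf j).2.
- by [].
- move=> g' hg' e w; apply: dsum_ext => i; exact: e.
Qed.
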